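(* Let $\mathbf X$ be a nonempty set, $m\ge1$ an integer and $Y>0$. Consider the protocol in which at each round $n=1,2,\dots$ Reality announces $x_n\in\mathbf X$, Predictor announces $\mu_n\in\mathbb R^m$, and Reality announces $y_n\in YU_m$. Let $F_1,F_2,\dots$ be a sequence of functions $F_i:\mathbf X\to\mathbb R^m$ and let $w_1,w_2,\dots$ be positive weights with $\sum_i w_i=1$. Then there is a strategy for Predictor producing predictions $\mu_n\in YU_m$ that guarantees, for all $N=1,2,\dots$ and all $i=1,2,\dots$, $$\sum_{n=1}^N\|y_n-\mu_n\|^2\le\sum_{n=1}^N\|y_n-F_i(x_n)\|^2+8Y^2\ln\frac1{w_i}.$$
   Context: $\|\cdot\|$ is the Euclidean norm on $\mathbb R^m$ and $U_m=\{v\in\mathbb R^m:\|v\|\le1\}$ is the closed unit ball, so $YU_m$ is the closed ball of radius $Y$ centred at $0$. A strategy for Predictor maps each history $(x_1,y_1,\dots,x_{n-1},y_{n-1},x_n)$ to $\mu_n$; the guarantee must hold for every (possibly adaptive) sequence of moves of Reality. *)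

(* Defs.v *)
From HB Require Import structures.
From mathcomp Require Import all_boot all_order all_algebra.
From mathcomp Require Import all_classical all_reals all_analysis.
Set Implicit Arguments. Unset Strict Implicit. Unset Printing Implicit Defensive.
Import Order.TTheory GRing.Theory Num.Theory.
Local Open Scope ring_scope.

Definition enorm (R : realType) (m : nat) (v : 'rV[R]_m) : R :=
  Num.sqrt (\sum_(j < m) (v ord0 j) ^+ 2).

(* A Predictor strategy: maps the history (x_1,y_1,...,x_{n-1},y_{n-1}) and the
   current x_n to the prediction mu_n. *)
Definition strategy (R : realType) (X : Type) (m : nat) :=
  seq (X * 'rV[R]_m) -> X -> 'rV[R]_m.

(* History of the first n rounds (0-indexed rounds 0..n-1). *)
Definition history (R : realType) (X : Type) (m : nat)
  (xs : nat -> X) (ys : nat -> 'rV[R]_m) (n : nat) : seq (X * 'rV[R]_m) :=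
  map (fun k => (xs k, ys k)) (iota 0 n).

Definition pred_at (R : realType) (X : Type) (m : nat) (S : strategy R X m)
  (xs : nat -> X) (ys : nat -> 'rV[R]_m) (n : nat) : 'rV[R]_m :=
  S (history xs ys n) (xs n).

(* Main.v *)
Require Import Defs.
From HB Require Import structures.
From mathcomp Require Import all_boot all_order all_algebra.
From mathcomp Require Import all_classical all_reals all_analysis.
From mathcomp Require Import ring lra.
Import Order.TTheory GRing.Theory Num.Theory.
Local Open Scope classical_set_scope.
Local Open Scope ring_scope.

Section S.
Import numFieldNormedType.Exports.
Variable R : realType.

Lemma cont_of_der (f df : R -> R) : (forall t : R, is_derive t (1:R) f (df t)) -> continuous f.
Proof. move=> H t; apply/differentiable_continuous/derivable1_diffP.
by case: (H t). Qed.

Lemma E1 (x : R) : 0 <= x -> 1 + x + x ^+ 2 / 2 <= expR x.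
Proof.
move=> x0; have [->|xp] := eqVneq x 0.
  by rewrite expR0 expr0n /= mul0r !addr0.
have x0' : 0 < x by rewrite lt0r xp x0.
pose f : R -> R := (expR + expR) - ((id : R -> R) + id) - (id : R -> R) * id.
have df (t : R) : is_derive t 1 f ((expR t + expR t) - (1 + 1) - (t + t)).
  apply: is_derive_eq; by rewrite /GRing.scale /=; ring.
have [] := @MVT R f _ 0 x x0' (fun t _ => df t).
  apply: continuous_subspaceT; exact: (@cont_of_der f _ df).
move=> c; rewrite in_itv/= => /andP[c0 cx].
move=> H.
have {H} H : expR x + expR x - (x + x) - x * x - (expR 0 + expR 0 - (0 + 0) - 0 * 0) = (expR c + expR c - (1 + 1) - (c + c)) * (x - 0) := H.
rewrite expR0 in H.
have : 0 <= ((expR c + expR c) - (1 + 1) - (c + c)) * x.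
  rewrite mulr_ge0 //; have := expR_ge1Dx c; lra.
rewrite subr0 in H; rewrite -H; rewrite expr2; lra.
Qed.

Lemma E2 (z : R) : 0 <= z -> (2 - z) * expR z <= 2 + z.
Proof.
move=> z0; have [->|zp] := eqVneq z 0.
  by rewrite expR0 subr0 addr0 mulr1.
have z0' : 0 < z by rewrite lt0r zp z0.
pose f : R -> R := ((fun=> 2) + (id : R -> R)) - ((fun=> 2) - (id : R -> R)) * expR.
have df (t : R) : is_derive t 1 f (1 - ((2 - t) * expR t - expR t)).
  apply: is_derive_eq; rewrite /GRing.scale !fctE /=; ring.
have [] := @MVT R f _ 0 z z0' (fun t _ => df t).
  apply: continuous_subspaceT; exact: (@cont_of_der f _ df).
move=> c; rewrite in_itv/= => /andP[c0 cx].
move=> H.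
have {H} H : (2 + z) - (2 - z) * expR z - ((2 + 0) - (2 - 0) * expR 0) = (1 - ((2 - c) * expR c - expR c)) * (z - 0) := H.
rewrite expR0 !subr0 in H.
have : 0 <= (1 - ((2 - c) * expR c - expR c)) * z.
  rewrite mulr_ge0 //.
  have h1 := expR_ge1Dx (- c).
  have h2 : expR c * expR (- c) = 1 by rewrite expRxMexpNx_1.
  have h3 := expR_gt0 c.
  nra.
rewrite -H; lra.
Qed.

Lemma Kscal (a b : R) : 0 <= a -> 0 <= b -> 2 * a ^+ 2 <= 1 -> 2 * b ^+ 2 <= 1 ->
  expR (a ^+ 2 - b ^+ 2) <= 1 + 2 * a ^+ 2 - 2 * (a * b).
Proof.
move=> a0 b0 ha hb.
have [ba|ab] := leP b a.
- set z := a ^+ 2 - b ^+ 2.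
  have z0 : 0 <= z by rewrite /z subr_ge0 ler_sqr.
  have z2 : z < 2 by rewrite /z; nra.
  have h := @E2 z z0.
  have e0 := expR_gt0 z.
  have key : 2 + z <= (2 - z) * (1 + 2 * a ^+ 2 - 2 * (a * b)).
    have h1 : 0 <= (a - b) ^+ 2 * (1 - a * (a + b)).
      apply: mulr_ge0; first exact: sqr_ge0.
      nra.
    have h2 : (2 - z) * (1 + 2 * a ^+ 2 - 2 * (a * b)) - (2 + z) = 2 * ((a - b) ^+ 2 * (1 - a * (a + b))).
      rewrite /z; ring.
    lra.
  have : (2 - z) * expR z <= (2 - z) * (1 + 2 * a ^+ 2 - 2 * (a * b)) by lra.
  by rewrite ler_pM2l // subr_gt0.
- set x := b ^+ 2 - a ^+ 2.
  have x0 : 0 <= x by rewrite /x subr_ge0 ler_sqr // ltW.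
  have h := @E1 x x0.
  have -> : a ^+ 2 - b ^+ 2 = - x by rewrite /x opprB.
  rewrite expRN.
  have e0 := expR_gt0 x.
  have Rp : 0 < 1 + 2 * a ^+ 2 - 2 * (a * b) by nra.
  have h1 : 0 <= (b - a) ^+ 2 * ((1 - (a + b) ^+ 2 / 2) * (1 + (b - a) * (a + b)) + (b - a) ^+ 2 * (a + b) ^+ 2 / 2).
    apply: mulr_ge0; first exact: sqr_ge0.
    apply: addr_ge0; last by apply: mulr_ge0 => //; apply: mulr_ge0; apply: sqr_ge0.
    apply: mulr_ge0; first by nra.
    nra.
  have h2 : (1 + x + x ^+ 2 / 2) * (1 + 2 * a ^+ 2 - 2 * (a * b)) - 1 = (b - a) ^+ 2 * ((1 - (a + b) ^+ 2 / 2) * (1 + (b - a) * (a + b)) + (b - a) ^+ 2 * (a + b) ^+ 2 / 2).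
    by rewrite /x; field.
  have h3 : (1 + x + x ^+ 2 / 2) * (1 + 2 * a ^+ 2 - 2 * (a * b)) <= expR x * (1 + 2 * a ^+ 2 - 2 * (a * b)).
    by rewrite ler_pM2r.
  rewrite -(ler_pM2l e0) mulfV ?gt_eqF //; lra.
Qed.

Variable m : nat.
Definition sq (v : 'rV[R]_m) : R := \sum_(j < m) v ord0 j ^+ 2.
Definition dot (u v : 'rV[R]_m) : R := \sum_(j < m) u ord0 j * v ord0 j.
Definition en (v : 'rV[R]_m) : R := Num.sqrt (sq v).

Lemma sq_ge0 v : 0 <= sq v.
Proof. by apply: sumr_ge0 => j _; apply: sqr_ge0. Qed.

Lemma en_ge0 v : 0 <= en v. Proof. exact: sqrtr_ge0. Qed.

Lemma en_sq v : en v ^+ 2 = sq v.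
Proof. by rewrite /en sqr_sqrtr // sq_ge0. Qed.

Lemma sum_quad (x y : 'I_m -> R) (al be : R) :
  \sum_j (al * x j + be * y j) ^+ 2 =
  al ^+ 2 * \sum_j x j ^+ 2 + 2 * al * be * \sum_j x j * y j + be ^+ 2 * \sum_j y j ^+ 2.
Proof.
rewrite !mulr_sumr -!big_split /=; apply: eq_bigr => j _; ring.
Qed.

Lemma sqB u v : sq (u - v) = sq u - 2 * dot u v + sq v.
Proof.
rewrite /sq /dot (_ : \sum_j (u - v) ord0 j ^+ 2 = \sum_j (1 * u ord0 j + (-1) * v ord0 j) ^+ 2).
  by rewrite sum_quad; ring.
by apply: eq_bigr => j _; rewrite !mxE; ring.
Qed.

Lemma sq_sub_le u v : sq (u - v) <= 2 * sq u + 2 * sq v.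
Proof.
rewrite /sq !mulr_sumr -big_split /=; apply: ler_sum => j _; rewrite !mxE.
have := sqr_ge0 (u ord0 j + v ord0 j); nra.
Qed.

Lemma sq0 v : sq v = 0 -> forall j, v ord0 j = 0.
Proof.
move=> h j; have /psumr_eq0P h2 := h.
have := h2 (fun j _ => sqr_ge0 (v ord0 j)) j isT.
by move/eqP; rewrite sqrf_eq0 => /eqP.
Qed.

Lemma CS u v : dot u v <= en u * en v.
Proof.
have [a0|a0] := eqVneq (en u) 0.
  have : sq u = 0 by rewrite -en_sq a0 expr0n.
  move/sq0 => hu; rewrite /dot big1 ?a0 ?mul0r // => j _; by rewrite hu mul0r.
have [b0|b0] := eqVneq (en v) 0.
  have : sq v = 0 by rewrite -en_sq b0 expr0n.
  move/sq0 => hv; rewrite /dot big1 ?b0 ?mulr0 // => j _; by rewrite hv mulr0.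
have ap : 0 < en u by rewrite lt0r a0 en_ge0.
have bp : 0 < en v by rewrite lt0r b0 en_ge0.
have := sum_quad (fun j => u ord0 j) (fun j => v ord0 j) (en v) (- en u).
rewrite -/(sq u) -/(sq v) -/(dot u v) -!en_sq => h.
have h0 : 0 <= \sum_j (en v * u ord0 j + - en u * v ord0 j) ^+ 2.
  by apply: sumr_ge0 => j _; apply: sqr_ge0.
rewrite h in h0.
have hab : 0 < en u * en v by apply: mulr_gt0.
nra.
Qed.

Lemma tangent (eta : R) u v : 0 < eta -> eta * sq u <= 2^-1 -> eta * sq v <= 2^-1 ->
  expR (- (eta * sq v)) <= expR (- (eta * sq u)) * (1 - 2 * eta * (dot u v - sq u)).
Proof.
move=> e0 hu hv.
set a := Num.sqrt eta * en u; set b := Num.sqrt eta * en v.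
have se : Num.sqrt eta ^+ 2 = eta by rewrite sqr_sqrtr // ltW.
have a2 : a ^+ 2 = eta * sq u by rewrite /a exprMn se en_sq.
have b2 : b ^+ 2 = eta * sq v by rewrite /b exprMn se en_sq.
have ab : a * b = eta * (en u * en v).
  by rewrite /a /b mulrACA -expr2 se.
have a0 : 0 <= a by rewrite /a mulr_ge0 ?sqrtr_ge0 ?en_ge0.
have b0 : 0 <= b by rewrite /b mulr_ge0 ?sqrtr_ge0 ?en_ge0.
have K := @Kscal a b a0 b0.
rewrite a2 b2 in K.
have K' := K ltac:(lra) ltac:(lra).
have -> : - (eta * sq v) = - (eta * sq u) + (a ^+ 2 - b ^+ 2) by rewrite a2 b2; ring.
rewrite expRD a2 b2 ler_pM2l ?expR_gt0 //.
have := CS u v => hcs.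
have : eta * dot u v <= a * b by rewrite ab ler_pM2l.
lra.
Qed.

Lemma dotB u v w : dot u (v - w) = dot u v - dot u w.
Proof. by rewrite /dot -sumrB; apply: eq_bigr => j _; rewrite !mxE; ring. Qed.

Lemma dotvv v : dot v v = sq v.
Proof. by apply: eq_bigr => j _; rewrite expr2. Qed.

Lemma coord_le (v : 'rV[R]_m) (j : 'I_m) : `|v ord0 j| <= en v.
Proof.
rewrite -sqrtr_sqr /en ler_sqrt ?sq_ge0 //.
rewrite /sq (bigD1 j) //= lerDl; apply: sumr_ge0 => k _; exact: sqr_ge0.
Qed.

Lemma cvg_bigsum (F : 'I_m -> nat -> R) (l : 'I_m -> R) :
  (forall j, F j @ \oo --> l j) -> (fun n => \sum_j F j n) @ \oo --> \sum_j l j.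
Proof.
move=> H; rewrite -fct_sumE.
apply: (big_ind2 (fun f (x : R) => f @ \oo --> x)).
- exact: cvg_cst.
- by move=> f1 x1 f2 x2 h1 h2; apply: cvgD.
- by move=> j _; apply: H.
Qed.

Lemma series_ge0_le (u : nat -> R) : (forall i, 0 <= u i) -> cvgn (series u) ->
  forall i, u i <= limn (series u).
Proof.
move=> u0 cu i; apply: le_trans (nondecreasing_cvgn_le _ cu i.+1).
  by rewrite seriesSr lerDr /series /=; apply: sumr_ge0 => k _.
by apply: nondecreasing_series => k _ _.
Qed.

Section Mix.
Variables (a : nat -> R) (g : nat -> 'rV[R]_m) (Y : R).
Hypothesis a0 : forall i, 0 < a i.
Hypothesis ca : cvgn (series a).
Hypothesis gY : forall i, en (g i) <= Y.
Hypothesis Y0 : 0 < Y.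

Let A := limn (series a).
Let G j := limn (series (fun i => a i * g i ord0 j)).
Let mu := \row_(j < m) (G j / A).

Lemma A_pos : 0 < A.
Proof. exact: lt_le_trans (a0 0) (@series_ge0_le a (fun i => ltW (a0 i)) ca 0). Qed.

Lemma cvgA : series a @ \oo --> A.
Proof. exact: ca. Qed.

Lemma cvgAc (c : R) : series (fun i => a i * c) @ \oo --> A * c.
Proof.
have -> : series (fun i => a i * c) = (fun n => series a n * c).
  by apply/funext => n; rewrite /series /= mulr_suml.
by apply: cvgM => //; apply: cvg_cst.
Qed.

Lemma cvgG j : series (fun i => a i * g i ord0 j) @ \oo --> G j.
Proof.
have : cvgn (series (fun i => a i * g i ord0 j)).
  apply: normed_cvg.
  apply: (@series_le_cvg _ _ (fun i => a i * Y)) => [i|i|i|] /=.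
  - exact: normr_ge0.
  - by rewrite mulr_ge0 // ltW.
  - rewrite normrM gtr0_norm //; rewrite ler_pM2l //.
    exact: le_trans (coord_le _ _) (gY i).
  - by apply/cvg_ex; exists (A * Y); apply: cvgAc.
by [].
Qed.

Lemma muE j : G j = A * mu ord0 j.
Proof. by rewrite mxE mulrC divfK // gt_eqF // A_pos. Qed.

Lemma cvg_dot (v : 'rV[R]_m) :
  series (fun i => a i * dot v (g i)) @ \oo --> A * dot v mu.
Proof.
have -> : series (fun i => a i * dot v (g i)) =
    (fun n => \sum_j (v ord0 j * series (fun i => a i * g i ord0 j) n)).
  apply/funext => n; rewrite /series /dot /=.
  under eq_bigr do rewrite mulr_sumr.
  rewrite exchange_big /=; apply: eq_bigr => j _; rewrite mulr_sumr.
  by apply: eq_bigr => i _; ring.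
rewrite /dot mulr_sumr.
under eq_bigr do rewrite mulrCA -muE.
apply: cvg_bigsum => j.
apply: cvgM; first exact: cvg_cst.
exact: cvgG.
Qed.

Lemma mix_norm : en mu <= Y.
Proof.
have h1 := cvg_dot mu.
have h2 := cvgAc (en mu * Y).
have := ler_cvg_to h1 h2.
have le : \forall n \near \oo, series (fun i => a i * dot mu (g i)) n <= series (fun i => a i * (en mu * Y)) n.
  apply: nearW => n; apply: ler_sum => i _.
  rewrite ler_pM2l //; apply: le_trans (CS _ _) _.
  by rewrite ler_wpM2l ?en_ge0 ?gY.
move=> /(_ _ le); rewrite ler_pM2l ?A_pos // dotvv -en_sq => h.
have e0 := en_ge0 mu; have y0 := Y0; rewrite expr2 in h; nra.
Qed.


Let eta := (8 * Y ^+ 2)^-1.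

Lemma eta_gt0 : 0 < eta.
Proof. by rewrite invr_gt0 mulr_gt0 // exprn_gt0. Qed.

Lemma eta_sq u v : en u <= Y -> en v <= Y -> eta * sq (u - v) <= 2^-1.
Proof.
move=> hu hv.
have su : sq u <= Y ^+ 2 by rewrite -en_sq; have := en_ge0 u; nra.
have sv : sq v <= Y ^+ 2 by rewrite -en_sq; have := en_ge0 v; nra.
have h := sq_sub_le u v.
have -> : 2^-1 = eta * (4 * Y ^+ 2).
  by rewrite /eta; field; rewrite gt_eqF.
rewrite ler_pM2l ?eta_gt0 //; lra.
Qed.

Lemma series_add (f h : nat -> R) : series (fun i => f i + h i) = (fun n => series f n + series h n).
Proof. by apply/funext => n; rewrite /series /= big_split. Qed.

Lemma series_scal (c : R) (f : nat -> R) : series (fun i => c * f i) = (fun n => c * series f n).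
Proof. by apply/funext => n; rewrite /series /= mulr_sumr. Qed.

Lemma mix_exp y : en y <= Y ->
  cvgn (series (fun i => a i * expR (- (eta * sq (y - g i))))) /\
  limn (series (fun i => a i * expR (- (eta * sq (y - g i))))) <= A * expR (- (eta * sq (y - mu))).
Proof.
move=> hy.
have cv : cvgn (series (fun i => a i * expR (- (eta * sq (y - g i))))).
  apply: (@series_le_cvg _ _ a) => [i|i|i|//].
  - by rewrite mulr_ge0 ?expR_ge0 // ltW.
  - exact: ltW.
  - rewrite ger_pMr // expR_le1 oppr_le0 mulr_ge0 ?sq_ge0 //; exact: ltW eta_gt0.
split => //.
set d := y - mu; set E := expR (- (eta * sq d)).
have hmu := mix_norm.
have H2 : series (fun i => a i * (E * (1 - 2 * eta * dot d y + 2 * eta * sq d)) + 2 * eta * E * (a i * dot d (g i))) @ \oo -->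
   A * (E * (1 - 2 * eta * dot d y + 2 * eta * sq d)) + 2 * eta * E * (A * dot d mu).
  rewrite series_add series_scal.
  apply: cvgD; first exact: cvgAc.
  apply: cvgM; first exact: cvg_cst.
  exact: cvg_dot.
have -> : A * expR (- (eta * sq (y - mu))) =  A * (E * (1 - 2 * eta * dot d y + 2 * eta * sq d)) + 2 * eta * E * (A * dot d mu).
  have : dot d y - dot d mu = sq d by rewrite -dotB dotvv.
  rewrite -/d -/E; move=> hh.
  have -> : dot d y = sq d + dot d mu by rewrite -hh; ring.
  ring.
apply: (ler_cvg_to cv H2).
apply: nearW => n; apply: ler_sum => i _.
have t := @tangent eta d (y - g i) eta_gt0 (@eta_sq y mu hy hmu) (@eta_sq y (g i) hy (gY i)).
have hh : a i * expR (- (eta * sq (y - g i))) <= a i * (E * (1 - 2 * eta * (dot d (y - g i) - sq d))).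
  by rewrite ler_pM2l.
apply: (le_trans hh); rewrite dotB le_eqVlt; apply/orP; left; apply/eqP; ring.
Qed.
End Mix.

Lemma sqZ (c : R) f : sq (c *: f) = c ^+ 2 * sq f.
Proof. by rewrite /sq mulr_sumr; apply: eq_bigr => j _; rewrite !mxE; ring. Qed.

Lemma dotZ u (c : R) f : dot u (c *: f) = c * dot u f.
Proof. by rewrite /dot mulr_sumr; apply: eq_bigr => j _; rewrite !mxE; ring. Qed.

Definition clip (Y : R) (f : 'rV[R]_m) := if en f <= Y then f else (Y / en f) *: f.

Lemma clip_norm Y f : 0 < Y -> en (clip Y f) <= Y.
Proof.
move=> Y0; rewrite /clip; case: ifP => // /negbT; rewrite -ltNge => hn.
have n0 : 0 < en f by apply: lt_trans hn.
rewrite {1}/en sqZ -(en_sq f).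
have -> : (Y / en f) ^+ 2 * en f ^+ 2 = Y ^+ 2 by field; rewrite gt_eqF.
by rewrite sqrtr_sqr ger0_norm // ltW.
Qed.

Lemma clip_le Y y f : 0 < Y -> en y <= Y -> sq (y - clip Y f) <= sq (y - f).
Proof.
move=> Y0 hy; rewrite /clip; case: ifP => // /negbT; rewrite -ltNge => hn.
have n0 : 0 < en f by apply: lt_trans hn.
rewrite !sqB sqZ dotZ -(en_sq f).
set c := Y / en f; set n := en f.
have cn : c * n = Y by rewrite /c /n divfK // gt_eqF.
have c1 : c <= 1 by rewrite /c ler_pdivrMr // mul1r ltW.
have D : dot y f <= Y * n.
  apply: le_trans (CS _ _) _; rewrite ler_pM2r //.
have p1 : 0 <= (1 - c) * (Y * n - dot y f) by apply: mulr_ge0; lra.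
have p2 : c ^+ 2 * n ^+ 2 = Y ^+ 2 by rewrite -exprMn cn.
have p3 : 0 <= (n - Y) ^+ 2 := sqr_ge0 _.
rewrite p2.
have p4 : c * (Y * n) = Y ^+ 2 by rewrite mulrCA cn expr2.
nra.
Qed.
End S.

Import numFieldNormedType.Exports.
Arguments sq {R m} v. Arguments en {R m} v. Arguments dot {R m} u v. Arguments clip {R m} Y f.

Theorem lemma1 (R : realType) (X : Type) (m : nat) (Y : R)
  (F : nat -> X -> 'rV[R]_m) (w : nat -> R) :
  inhabited X -> (0 < m)%N -> 0 < Y ->
  (forall i, 0 < w i) -> series w @ \oo --> (1%R : R^o) ->
  exists S : strategy R X m,
    (forall h x, enorm (S h x) <= Y) /\
    (forall (xs : nat -> X) (ys : nat -> 'rV[R]_m),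
       (forall n, enorm (ys n) <= Y) ->
       forall (N : nat) (i : nat),
         \sum_(n < N) enorm (ys n - pred_at S xs ys n) ^+ 2
         <= \sum_(n < N) enorm (ys n - F i (xs n)) ^+ 2
            + 8 * Y ^+ 2 * ln (w i)^-1).
Proof.
move=> _ _ Y0 w0 wcv.
set eta := (8 * Y ^+ 2)^-1.
have eta0 : 0 < eta by rewrite invr_gt0 mulr_gt0 // exprn_gt0.
pose g i x := clip Y (F i x).
pose Lc (h : seq (X * 'rV[R]_m)) i := \sum_(p <- h) sq (p.2 - g i p.1).
pose wt h i := w i * expR (- (eta * Lc h i)).
pose S : strategy R X m := fun h x =>
  \row_j (limn (series (fun i => wt h i * g i x ord0 j)) / limn (series (wt h))).
have Lc0 h i : 0 <= Lc h i by apply: sumr_ge0 => p _; apply: sq_ge0.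
have wt0 h i : 0 < wt h i by rewrite mulr_gt0 ?expR_gt0.
have wcvn : cvgn (series w) by apply/cvg_ex; exists 1.
have wtcv h : cvgn (series (wt h)).
  apply: (@series_le_cvg _ _ w) => [i|i|i|//].
  - exact: ltW.
  - exact: ltW.
  - rewrite ger_pMr // expR_le1 oppr_le0 mulr_ge0 //; exact: ltW.
have gY i x : en (g i x) <= Y by apply: clip_norm.
exists S; split.
  move=> h x; exact: (@mix_norm R m (wt h) (fun i => g i x) Y (wt0 h) (wtcv h) (fun i => gY i x) Y0).
move=> xs ys hys N i.
have enorm_sq (v : 'rV[R]_m) : enorm v ^+ 2 = sq v by exact: en_sq.
pose H n := history xs ys n.
have hist_S n : H n.+1 = rcons (H n) (xs n, ys n).
  by rewrite /H /history -[n.+1]addn1 iotaD map_cat /= add0n cats1.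
have wtS n j : wt (H n.+1) j = wt (H n) j * expR (- (eta * sq (ys n - g j (xs n)))).
  rewrite /wt /Lc hist_S -cats1 big_cat big_seq1 /= -mulrA -expRD.
  by congr (_ * expR _); ring.
pose Phi n := limn (series (wt (H n))).
have Phi0 : Phi 0 = 1.
  rewrite /Phi (_ : wt (H 0) = w); first exact: cvg_lim wcv.
  by apply/funext => j; rewrite /wt /Lc /H /history /= big_nil mulr0 oppr0 expR0 mulr1.
have PhiS n : Phi n.+1 <= Phi n * expR (- (eta * sq (ys n - S (H n) (xs n)))).
  have hm := (@mix_exp R m (wt (H n)) (fun j => g j (xs n)) Y (wt0 _) (wtcv _) (fun j => gY j (xs n)) Y0 (ys n) (hys n)).2.
  have eqw : wt (H n.+1) = fun j => wt (H n) j * expR (- (eta * sq (ys n - g j (xs n)))).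
    by apply/funext => j; exact: wtS.
  rewrite /Phi eqw; exact: hm.
have PhiN : Phi N <= expR (- (eta * \sum_(n < N) sq (ys n - pred_at S xs ys n))).
  elim: N => [|N IH]; first by rewrite big_ord0 mulr0 oppr0 expR0 Phi0.
  rewrite big_ord_recr /= mulrDr opprD expRD.
  apply: le_trans (PhiS N) _.
  by rewrite ler_wpM2r ?expR_ge0.
have low : wt (H N) i <= Phi N by apply: series_ge0_le => // j; apply: ltW.
have LcE : Lc (H N) i = \sum_(n < N) sq (ys n - g i (xs n)).
  rewrite /Lc /H /history big_map (_ : iota 0 N = index_iota 0 N); last by rewrite /index_iota subn0.
  by rewrite big_mkord.
set La := \sum_(n < N) sq (ys n - pred_at S xs ys n).
have -> : \sum_(n < N) enorm (ys n - pred_at S xs ys n) ^+ 2 = La.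
  by apply: eq_bigr => n _; rewrite enorm_sq.
set Lo := \sum_(n < N) enorm (ys n - F i (xs n)) ^+ 2.
have hLo : Lc (H N) i <= Lo.
  rewrite LcE /Lo; apply: ler_sum => n _; rewrite enorm_sq.
  exact: clip_le Y0 (hys n).
have h : wt (H N) i <= expR (- (eta * La)) := le_trans low PhiN.
have hl : ln (w i) - eta * Lc (H N) i <= - (eta * La).
  move: h; rewrite -ler_ln ?posrE ?wt0 ?expR_gt0 // /wt lnM ?posrE ?w0 ?expR_gt0 // !expRK.
  by [].
rewrite lnV ?posrE //.
have ek : eta * (8 * Y ^+ 2) = 1 by rewrite mulVf // mulf_neq0 // expf_neq0 // gt_eqF.
rewrite -(ler_pM2l eta0) mulrDr mulrA ek mul1r.
have : eta * Lc (H N) i <= eta * Lo by rewrite ler_pM2l.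
lra.
Qed.
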